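(* Let $0<p,q\le\infty$ and let $g$ be an entire function such that the Volterra-type integral operator $V_g:\mathcal{F}_p\to\mathcal{F}_q$ is compact. Then $V_g$ and $V_{g(0)}$ (the Volterra-type integral operator induced by the constant function $g(0)$) belong to the same path connected component of the space $\mathbf{V}(\mathcal{F}_p,\mathcal{F}_q)$.
   Context: For $0<p<\infty$, the Fock space $\mathcal{F}_p$ consists of entire functions $f$ on $\mathbb{C}$ with $\|f\|_p^p=\frac{p}{2\pi}\int_{\mathbb{C}}|f(z)|^pe^{-\frac p2|z|^2}\,dA(z)<\infty$, where $dA$ is Lebesgue area measure; $\mathcal{F}_\infty$ consists of entire $f$ with $\|f\|_\infty=\sup_{z\in\mathbb{C}}|f(z)|e^{-\frac12|z|^2}<\infty$. For an entire function $g$, the Volterra-type integral operator is $V_gf(z)=\int_0^z f(w)g'(w)\,dw$. $\mathbf{V}(\mathcal{F}_p,\mathcal{F}_q)$ denotes the set of all bounded operators $V_g:\mathcal{F}_p\to\mathcal{F}_q$ ($g$ entire), equipped with the operator norm topology. *)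

(* Defs.v *)
(* Complex numbers are mathcomp-real-closed's
   R[i] over an arbitrary R : realType; we use the regular copy (R[i])^o so
   that MathComp-Analysis equips it with its normed-module structure over
   the field R[i] itself, which makes [derivable f z 1] *complex*
   differentiability. *)
From mathcomp Require Import all_boot all_order all_algebra.
From mathcomp Require Import all_classical all_reals all_analysis.
From mathcomp.real_closed Require Import complex.

Set Implicit Arguments.
Unset Strict Implicit.
Unset Printing Implicit Defensive.

Import Order.TTheory GRing.Theory Num.Theory.
Local Open Scope classical_set_scope.
Local Open Scope ring_scope.
Local Open Scope complex_scope.

Definition CC (R : realType) := (R[i])^o.

Definition entire (R : realType) (f : CC R -> CC R) : Prop :=
  forall z : CC R, derivable f z 1.

Definition cderiv (R : realType) (g : CC R -> CC R) : CC R -> CC R :=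
  derive1 g.

Definition cabs (R : realType) (z : R[i]) : R :=
  Num.sqrt (complex.Re z ^+ 2 + complex.Im z ^+ 2).

Definition cpt (R : realType) (xy : R * R) : CC R := xy.1 +i* xy.2.

Definition fock_int (R : realType) (p : R) (f : CC R -> CC R) : \bar R :=
  (\int[(@lebesgue_measure R) \x (@lebesgue_measure R)]_(xy in setT)
     ((cabs (f (cpt xy))) `^ p
        * expR (- (p / 2) * (cabs (cpt xy)) ^+ 2))%:E)%E.

(* the Fock (quasi-)norm ||f||_p, 0 < p <= +oo, valued in \bar R
   (value +oo means f is not in F_p). The case -oo is never used. *)
Definition fock_norm (R : realType) (p : \bar R) (f : CC R -> CC R) : \bar R :=
  match p with
  | r%:E => poweR ((r / (2 * pi))%:E * fock_int r f)%E r^-1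
  | +oo%E => ereal_sup [set (cabs (f z) * expR (- (cabs z) ^+ 2 / 2))%:E
                         | z in [set: CC R]]
  | -oo%E => 0%E
  end.

Definition in_fock (R : realType) (p : \bar R) (f : CC R -> CC R) : Prop :=
  entire f /\ (fock_norm p f < +oo)%E.

(* Volterra-type integral operator
   V_g f (z) = \int_0^z f(w) g'(w) dw, the integral taken along the segment
   [0, z], i.e. = \int_0^1 f(t z) g'(t z) z dt (real and imaginary parts
   integrated separately against Lebesgue measure on [0,1]). *)
Definition volterra (R : realType) (g f : CC R -> CC R) : CC R -> CC R :=
  fun z =>
    let F := fun t : R => (f (t%:C * z) * cderiv g (t%:C * z) * z : R[i]) in
    (Rintegral (@lebesgue_measure R) `[0%R, 1%R] (fun t => complex.Re (F t)))
    +i* (Rintegral (@lebesgue_measure R) `[0%R, 1%R] (fun t => complex.Im (F t))).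

Definition vdist (R : realType) (p q : \bar R) (g1 g2 : CC R -> CC R) : \bar R :=
  ereal_sup [set fock_norm q (fun z => volterra g1 f z - volterra g2 f z)
            | f in [set f | entire f /\ (fock_norm p f <= 1)%E]].

Definition vnorm (R : realType) (p q : \bar R) (g : CC R -> CC R) : \bar R :=
  ereal_sup [set fock_norm q (volterra g f)
            | f in [set f | entire f /\ (fock_norm p f <= 1)%E]].

Definition vbounded (R : realType) (p q : \bar R) (g : CC R -> CC R) : Prop :=
  (vnorm p q g < +oo)%E.

Definition vcompact (R : realType) (p q : \bar R) (g : CC R -> CC R) : Prop :=
  forall f : nat -> CC R -> CC R,
    (forall n, entire (f n)) ->
    (exists M : R, forall n, (fock_norm p (f n) <= M%:E)%E) ->
    exists phi : nat -> nat, (forall k, (phi k < phi k.+1)%N) /\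
      exists F : CC R -> CC R, in_fock q F /\
        ((fun k => fock_norm q (fun z => volterra g (f (phi k)) z - F z))
           @ \oo --> 0%E).

(* Main.v *)
Require Import Defs.
From mathcomp Require Import all_boot all_order all_algebra.
From mathcomp Require Import all_classical all_reals all_analysis.
From mathcomp.real_closed Require Import complex.
Import Order.TTheory GRing.Theory Num.Theory.
Local Open Scope classical_set_scope.
Local Open Scope ring_scope.
Import HBNNSimple.
Section S.
Context d (T : measurableType d) (R : realType) (mu : {measure set T -> \bar R}).
Local Open Scope ereal_scope.
Definition nnI (F : T -> \bar R) := ereal_sup [set sintegral mu h |
  h in [set h : {nnsfun T >-> R} | forall x, (h x)%:E <= F x]].
Lemma test D f : (forall x, D x -> 0 <= f x) -> \int[mu]_(x in D) f x = nnI (f \_ D).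
Proof. exact: ge0_integralE. Qed.
Lemma nnI_le (k : R) F : (0 < k)%R -> nnI (fun x => k%:E * F x) <= k%:E * nnI F.
Proof.
move=> k0; apply: ge_ereal_sup => _ [h hle <-].
have ki0 : (0 <= k^-1)%R by rewrite invr_ge0 ltW.
pose h' := scale_nnsfun h ki0.
have h'E x : h' x = (k^-1 * h x)%R by [].
rewrite (eq_sintegral (cst k \* h')%R); last first.
  by move=> x /=; rewrite mulrA mulfV ?gt_eqF // mul1r.
rewrite sintegralrM; apply: lee_wpmul2l; first by rewrite lee_fin ltW.
apply: ereal_sup_ubound; exists h' => // x.
rewrite h'E EFinM -[F x](mul1e) -(@mulVf _ k) ?gt_eqF// EFinM -muleA.
by apply: lee_wpmul2l => //; rewrite lee_fin.
Qed.
Lemma ge0_int_scale D f (k : R) : (0 <= k)%R -> (forall x, D x -> 0 <= f x) ->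
  \int[mu]_(x in D) (k%:E * f x) = k%:E * \int[mu]_(x in D) f x.
Proof.
move=> k0 f0; have [->|kn] := eqVneq k 0%R.
  by under eq_integral do rewrite mul0e; rewrite integral0 mul0e.
have kp : (0 < k)%R by rewrite lt_neqAle eq_sym kn k0.
rewrite !ge0_integralE //; last by move=> x Dx; rewrite mule_ge0 ?lee_fin ?f0.
rewrite erestrict_scale; set F := f \_ D.
apply/eqP; rewrite eq_le nnI_le //=.
have := nnI_le (k^-1) (fun x => k%:E * F x) (ltac:(by rewrite invr_gt0)).
rewrite (_ : (fun x => k^-1%:E * (k%:E * F x)) = F); last first.
  by apply/funext => x; rewrite muleA -EFinM mulVf ?kn // mul1e.
move=> H; rewrite -[X in _ <= X]mul1e -(@mulfV _ k) ?kn // EFinM -muleA.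
by apply: lee_wpmul2l => //; rewrite lee_fin ltW.
Qed.
End S.
Local Open Scope ereal_scope.
Lemma fine_scale (R : realType) (c : R) (a b : \bar R) : (0 <= c)%R -> 0 <= a -> 0 <= b ->
  fine (c%:E * a - c%:E * b) = (c * fine (a - b))%R.
Proof.
move=> c0; have [->|cp] := eqVneq c 0%R.
  by rewrite !mul0e subee // mul0r.
have cp' : (0 < c)%R by rewrite lt_neqAle eq_sym cp c0.
case: a => [a| |] //; case: b => [b| |] // _ _.
- by rewrite /= mulrBr.
- by rewrite gt0_muley ?lte_fin //= mulr0.
- by rewrite gt0_muley ?lte_fin //= mulr0.
- by rewrite gt0_muley ?lte_fin //= mulr0.
Qed.
Lemma fine_swap (R : realType) (a b : \bar R) : 0 <= a -> 0 <= b ->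
  fine (b - a) = (- fine (a - b))%R.
Proof.
case: a => [a| |] //; case: b => [b| |] // _ _ /=; rewrite ?oppr0 //.
by rewrite opprB.
Qed.
Lemma Rint_scale d (T : measurableType d) (R : realType) (mu : {measure set T -> \bar R})
  D (f : T -> R) (c : R) :
  Rintegral mu D (fun x => c * f x)%R = (c * Rintegral mu D f)%R.
Proof.
rewrite /Rintegral.
under eq_integral do rewrite EFinM.
rewrite integralE [X in _ = (_ * fine X)%R]integralE.
have [c0|c0] := leP 0%R c.
  rewrite ge0_funeposM // ge0_funenegM // !ge0_int_scale //.
  by apply: fine_scale => //; apply: integral_ge0 => x _; [exact: funepos_ge0|exact: funeneg_ge0].
have c0' : (0 <= - c)%R by rewrite oppr_ge0 ltW.
rewrite le0_funeposM ?ltW // le0_funenegM ?ltW // -!EFinN !ge0_int_scale //.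
rewrite fine_scale //; last 2 first.
  by apply: integral_ge0 => x _; exact: funeneg_ge0.
  by apply: integral_ge0 => x _; exact: funepos_ge0.
rewrite fine_swap ?mulrNN //.
  by apply: integral_ge0 => x _; exact: funepos_ge0.
  by apply: integral_ge0 => x _; exact: funeneg_ge0.
Qed.
Local Open Scope ring_scope.
Section T.
Variable R : realType.
Lemma isd (g : CC R -> CC R) (a b : CC R) z : derivable g z 1 ->
  is_derive z (1 : CC R) (fun w => a * g w + b) (a * 'D_1 g z).
Proof.
move=> dg. have H1 := @is_deriveZ _ _ _ g a z 1 _ (derivableP dg).
have H2 := @is_derive_cst _ _ _ b z (1 : CC R).
have := @is_deriveD _ _ _ (a *: g) (cst b) z 1 _ _ H1 H2.
by rewrite addr0.
Qed.
Lemma cderiv_aff (g : CC R -> CC R) (a b : CC R) z : derivable g z 1 ->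
  cderiv (fun w => a * g w + b) z = a * cderiv g z.
Proof.
move=> dg; have H := @isd g a b z dg.
rewrite /cderiv !derive1E. rewrite (@derive_val _ _ _ _ _ _ _ H). reflexivity.
Qed.
Lemma derivable_aff (g : CC R -> CC R) (a b : CC R) z : derivable g z 1 ->
  derivable (fun w => a * g w + b) z 1.
Proof. move=> dg; have H := @isd g a b z dg. exact: (@ex_derive _ _ _ _ _ _ _ H). Qed.
End T.
Local Open Scope complex_scope.
Section V.
Variable R : realType.
Lemma ReZ (c : R) (w : R[i]) : complex.Re (c%:C * w) = c * complex.Re w.
Proof. by case: w => x y /=; rewrite mul0r subr0. Qed.
Lemma ImZ (c : R) (w : R[i]) : complex.Im (c%:C * w) = c * complex.Im w.
Proof. by case: w => x y /=; rewrite mul0r addr0. Qed.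
Lemma complexZ (c x y : R) : (c * x) +i* (c * y) = c%:C * (x +i* y).
Proof.
have -> : c%:C * (x +i* y) = complex.Re (c%:C * (x +i* y)) +i* complex.Im (c%:C * (x +i* y)).
  by case: (c%:C * _).
by rewrite ReZ ImZ.
Qed.
Lemma volterra_aff (g f : CC R -> CC R) (c : R) (b : CC R) z : entire g ->
  volterra (fun w => c%:C * g w + b) f z = c%:C * volterra g f z.
Proof.
move=> eg; rewrite /volterra.
have E : forall t : R, (f (t%:C * z) * cderiv (fun w => c%:C * g w + b) (t%:C * z) * z : R[i])
   = c%:C * (f (t%:C * z) * cderiv g (t%:C * z) * z).
  move=> t; rewrite (@cderiv_aff R g c%:C b (t%:C * z) (eg _)).
  by rewrite mulrA (mulrC (f _)) -!mulrA.
rewrite -complexZ -!Rint_scale.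
congr (_ +i* _); congr (Rintegral _ _ _); apply/funext => t.
  by rewrite -ReZ; congr complex.Re; apply: E.
by rewrite -ImZ; congr complex.Im; apply: E.
Qed.
Lemma cderiv_cst (b : CC R) z : cderiv (fun _ => b) z = 0.
Proof. by rewrite /cderiv derive1E derive_cst. Qed.
Lemma volterra_cst (f : CC R -> CC R) (b : CC R) z :
  volterra (fun _ => b) f z = 0.
Proof.
rewrite /volterra.
have R0 : Rintegral lebesgue_measure `[0%R, 1%R] (fun _ : R => 0 : R) = 0.
  by rewrite /Rintegral integral0.
transitivity (Rintegral lebesgue_measure `[0%R, 1%R] (fun _ : R => 0 : R) +i*
   Rintegral lebesgue_measure `[0%R, 1%R] (fun _ : R => 0 : R)); last by rewrite R0.
congr (_ +i* _); congr (Rintegral _ _ _); apply/funext => t.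
  by rewrite (@cderiv_cst b (t%:C * z)) mulr0 mul0r.
by rewrite (@cderiv_cst b (t%:C * z)) mulr0 mul0r.
Qed.
End V.
Section W.
Variable R : realType.
Local Open Scope complex_scope.
Lemma cabsZ (c : R) (w : R[i]) : cabs (c%:C * w) = `|c| * cabs w.
Proof.
rewrite /cabs ReZ ImZ !exprMn -mulrDr sqrtrM ?sqr_ge0 // sqrtr_sqr //.
Qed.
Lemma cabs_ge0 (w : R[i]) : (0 <= cabs w)%R.
Proof. exact: sqrtr_ge0. Qed.
Lemma subC (a b : R) : (a%:C - b%:C : R[i]) = (a - b)%:C.
Proof. by rewrite -rmorphB. Qed.
Lemma mul1C (w : R[i]) : (1 : R)%:C * w = w.
Proof. by rewrite rmorph1 mul1r. Qed.
Lemma mul0C (w : R[i]) : (0 : R)%:C * w = 0.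
Proof. by rewrite rmorph0 mul0r. Qed.
Local Open Scope ereal_scope.
Lemma fock_normZ (q : \bar R) (c : R) (G : CC R -> CC R) : 0 < q ->
  fock_norm q (fun z => (c%:C * G z)%R) <= `|c|%:E * fock_norm q G.
Proof.
case: q => [r| |] // r0.
- rewrite lte_fin in r0.
  have I : fock_int r (fun z => (c%:C * G z)%R) = (`|c| `^ r)%:E * fock_int r G.
    rewrite /fock_int -ge0_int_scale ?powR_ge0 //; last first.
      by move=> xy _; rewrite lee_fin mulr_ge0 ?powR_ge0 ?expR_ge0.
    apply: eq_integral => xy _.
    rewrite cabsZ powRM ?normr_ge0 ?cabs_ge0 // -EFinM; congr EFin; exact: (esym (mulrA _ _ _)).
  have J : 0 <= (r / (2 * pi))%:E * fock_int r G.
    apply: mule_ge0.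
      by rewrite lee_fin divr_ge0 ?ltW // mulr_gt0 ?pi_gt0.
    by rewrite /fock_int; apply: integral_ge0 => xy _; rewrite lee_fin mulr_ge0 ?powR_ge0 ?expR_ge0.
  rewrite /fock_norm I muleCA (@poweRM _ (`|c| `^ r)%:E) ?lee_fin ?powR_ge0 //.
  by rewrite poweR_EFin -powRrM mulfV ?gt_eqF // powRr1.
- apply: ge_ereal_sup => _ [z _ <-].
  rewrite cabsZ -mulrA EFinM lee_wpmul2l //.
  by apply: ereal_sup_ubound; exists z.
Qed.
End W.
Section M.
Variable R : realType.
Local Open Scope complex_scope.
Local Open Scope ereal_scope.
Lemma mul_lty (k : R) (x : \bar R) : (0 <= k)%R -> x < +oo -> k%:E * x < +oo.
Proof.
move=> k0; case: x => [x| |] // _; first by rewrite -EFinM ltry.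
have [->|kn] := eqVneq k 0%R; first by rewrite mul0e ltry.
by rewrite gt0_muleNy ?ltNyr // lte_fin lt_neqAle eq_sym kn k0.
Qed.
Definition hpath (g : CC R -> CC R) (t : R) : CC R -> CC R :=
  fun w => ((1 - t)%:C * g w + t%:C * g 0)%R.
Lemma volterra_h g t f : entire g ->
  volterra (hpath g t) f = (fun z => (1 - t)%:C * volterra g f z)%R.
Proof. by move=> eg; apply/funext => z; rewrite /hpath volterra_aff. Qed.
Lemma vnorm_h p q g t : (0 < q) -> entire g ->
  vnorm p q (hpath g t) <= `|1 - t|%:E * vnorm p q g.
Proof.
move=> q0 eg; apply: ge_ereal_sup => _ [f Sf <-].
rewrite volterra_h //; apply: le_trans (@fock_normZ _ _ _ _ q0) _.
by rewrite lee_wpmul2l // ; apply: ereal_sup_ubound; exists f.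
Qed.
Lemma vdist_h p q g t t0 : (0 < q) -> entire g ->
  vdist p q (hpath g t) (hpath g t0) <= `|t0 - t|%:E * vnorm p q g.
Proof.
move=> q0 eg; apply: ge_ereal_sup => _ [f Sf <-].
rewrite !volterra_h //.
have -> : (fun z => (1 - t)%:C * volterra g f z - (1 - t0)%:C * volterra g f z)%R
   = (fun z => (t0 - t)%:C * volterra g f z)%R.
  apply/funext => z; rewrite -mulrBl subC.
  have E : (1 - t - (1 - t0))%R = (t0 - t)%R.
    by rewrite opprB addrC addrA subrK.
  by rewrite E.
apply: le_trans (@fock_normZ _ _ _ _ q0) _.
by rewrite lee_wpmul2l // ; apply: ereal_sup_ubound; exists f.
Qed.
End M.

Theorem theorem2p1 (R : realType) (p q : \bar R) (g : CC R -> CC R) :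
  (0 < p)%E -> (0 < q)%E -> entire g ->
  vbounded p q g -> vcompact p q g ->
  exists h : R -> CC R -> CC R,
    (forall t : R, 0 <= t <= 1 -> entire (h t) /\ vbounded p q (h t)) /\
    (forall f : CC R -> CC R, in_fock p f ->
       volterra (h 0) f = volterra g f /\
       volterra (h 1) f = volterra (fun _ => g 0) f) /\
    (forall t0 : R, 0 <= t0 <= 1 ->
       forall eps : R, 0 < eps ->
       exists2 delta : R, 0 < delta &
         forall t : R, 0 <= t <= 1 -> `|t - t0| < delta ->
           (vdist p q (h t) (h t0) < eps%:E)%E).
Proof.
move=> p0 q0 eg vb _.
exists (@hpath R g); split; [|split].
- move=> t _; split.
    by move=> z; apply: derivable_aff; apply: eg.
  by apply: le_lt_trans (@vnorm_h _ _ _ _ _ q0 eg) _; apply: mul_lty.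
- move=> f _; split.
    by rewrite volterra_h //; apply/funext => z; rewrite subr0 mul1C.
  rewrite volterra_h //; apply/funext => z.
  by rewrite subrr mul0C volterra_cst.
- move=> t0 _ eps eps0.
  set M := vnorm p q g.
  have M1 : (0 < `|fine M| + 1)%R by rewrite ltr_wpDl.
  exists (eps / (`|fine M| + 1))%R; first by rewrite divr_gt0.
  move=> t _ dt.
  apply: le_lt_trans (@vdist_h _ _ _ _ _ _ q0 eg) _.
  rewrite -/M distrC.
  move: vb; rewrite /vbounded -/M.
  clear M1; case: M dt => [m| |] // dt _.
    rewrite -EFinM lte_fin.
    apply: (@le_lt_trans _ _ (`|t - t0| * (`|m| + 1))%R).
      by rewrite ler_wpM2l // (le_trans (ler_norm m)) // lerDl.
    by rewrite -ltr_pdivlMr.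
  have [->|kn] := eqVneq `|t - t0| 0%R; first by rewrite mul0e lte_fin.
  by rewrite gt0_muleNy ?ltNyr // lte_fin lt_neqAle eq_sym kn normr_ge0.
Qed.
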